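(* Let $1/4\le\beta<1/3$ and let $G$ be a graph of order $n$ with minimum degree $(1-\beta)n$. Then for every triangle $T\in\mathcal{K}_3$, $$\widetilde D(T)\ \ge\ \left(1-\frac{2}{29-75\beta}\right)\frac{4\beta-1}{1-2\beta}D_+(T)-(1-2\beta)\sum_{e\in\mathcal{K}_2(T)}\frac{D_+(e)}{D_+(e)+\beta}.$$ Moreover, if equality holds then $T$ is not heavy and $d(v)=(1-\beta)n$ for all $v\in T$.
   Context: All graphs are finite and simple. For a graph $G$, $\mathcal{K}_t$ is the set of $t$-cliques (identified with vertex sets); $\mathcal{K}_t(S)$ is the set of $t$-cliques contained in a clique $S$. The degree $d(T)$ of a clique $T$ is the number of cliques with one more vertex containing $T$, and $D(T)=d(T)/n$. Here $p=\lceil\beta^{-1}\rceil-1=3$. For $T\in\mathcal{K}_t$, $1\le t\le 4$, $D_-(T)=\min\{D(T),(4-t)\beta\}$, $D_+(T)=D(T)-D_-(T)$, and $T$ is heavy if $D_+(T)>0$. For a triangle $T$, $\widetilde D(T)=\sum_{e\in\mathcal{K}_2(T)}D_-(e)-\big(2-3\beta+D_-(T)\big)$. *)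

(* Defs.v *)
From HB Require Import structures.
From mathcomp Require Import all_boot all_order all_algebra.
Set Implicit Arguments. Unset Strict Implicit. Unset Printing Implicit Defensive.
Import Order.TTheory GRing.Theory Num.Theory.

Definition simple_graph (V : finType) (adj : rel V) : Prop :=
  symmetric adj /\ irreflexive adj.

Definition is_clique (V : finType) (adj : rel V) (S : {set V}) : bool :=
  [forall x in S, forall y in S, (x != y) ==> adj x y].

Definition is_tclique (V : finType) (adj : rel V) (t : nat) (S : {set V}) : bool :=
  is_clique adj S && (#|S| == t).

Definition cdeg (V : finType) (adj : rel V) (T : {set V}) : nat :=
  #|[set S : {set V} | is_tclique adj #|T|.+1 S && (T \subset S)]|.

Local Open Scope ring_scope.

Definition cD (R : realFieldType) (V : finType) (adj : rel V) (T : {set V}) : R :=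
  (cdeg adj T)%:R / (#|V|)%:R.

(* D_-(T) = min{D(T), (4 - t) beta} with t = |T| (here p = 3). *)
Definition Dminus (R : realFieldType) (beta : R) (V : finType) (adj : rel V)
  (T : {set V}) : R :=
  Num.min (cD R adj T) ((4 - (#|T|)%:R) * beta).

Definition Dplus (R : realFieldType) (beta : R) (V : finType) (adj : rel V)
  (T : {set V}) : R :=
  cD R adj T - Dminus beta adj T.

Definition heavy (R : realFieldType) (beta : R) (V : finType) (adj : rel V)
  (T : {set V}) : bool :=
  0 < Dplus beta adj T.

Definition Dtilde (R : realFieldType) (beta : R) (V : finType) (adj : rel V)
  (T : {set V}) : R :=
  (\sum_(e : {set V} | (e \subset T) && is_tclique adj 2 e) Dminus beta adj e)
  - (2 - 3 * beta + Dminus beta adj T).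

(* Main.v *)
Require Import Defs.
From HB Require Import structures.
From mathcomp Require Import all_boot all_order all_algebra.
From Stdlib Require Import Ring Lia.
Import Order.TTheory GRing.Theory Num.Theory.
Set Implicit Arguments. Unset Strict Implicit. Unset Printing Implicit Defensive.

Section Graph.
Variables (V : finType) (adj : rel V).
Hypothesis adjC : symmetric adj.
Hypothesis adjI : irreflexive adj.

Definition Nb (T : {set V}) : {set V} := [set w | [forall x in T, adj x w]].

Lemma Nb_notin T w : w \in Nb T -> w \notin T.
Proof.
rewrite inE => /forall_inP H; apply/negP => wT.
by have := H w wT; rewrite adjI.
Qed.

Lemma cdegE T : is_clique adj T -> cdeg adj T = #|Nb T|.
Proof.
move=> cT; rewrite /cdeg.
have -> : [set S : {set V} | is_tclique adj #|T|.+1 S && (T \subset S)]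
        = [set w |: T | w in Nb T].
  apply/setP => S; rewrite inE; apply/idP/imsetP.
  - case/andP => /andP [cS /eqP cardS] TS.
    have cD : #|S :\: T| = 1%N.
      by rewrite cardsD (setIidPr TS) cardS subSn // subnn.
    move/eqP/cards1P: cD => [w Hw].
    have : w \in S :\: T by rewrite Hw set11.
    rewrite inE => /andP [wT wS].
    exists w.
      rewrite inE; apply/forall_inP => x xT.
      move/forall_inP: cS => /(_ x (subsetP TS x xT)) /forall_inP /(_ w wS) /implyP.
      apply; apply/negP => /eqP xw; by rewrite -xw xT in wT.
    apply/setP => y; rewrite in_setU1.
    case yT: (y \in T); first by rewrite orbT (subsetP TS).
    rewrite orbF; apply/idP/eqP => [yS|->//].
    have : y \in S :\: T by rewrite inE yT yS.
    by rewrite Hw inE => /eqP.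
  - case=> w wN ->.
    have wT := Nb_notin wN.
    rewrite subsetUr andbT /is_tclique cardsU1 wT eqxx andbT /is_clique.
    apply/forall_inP => x; rewrite in_setU1 => /orP [/eqP->|xT];
      apply/forall_inP => y; rewrite in_setU1 => /orP [/eqP->|yT];
      apply/implyP => neq.
    + by rewrite eqxx in neq.
    + by move: wN; rewrite inE => /forall_inP /(_ y yT); rewrite adjC.
    + by move: wN; rewrite inE => /forall_inP /(_ x xT).
    + by move/forall_inP: cT => /(_ x xT) /forall_inP /(_ y yT) /implyP; apply.
rewrite card_in_imset //.
move=> w1 w2 /Nb_notin w1T /Nb_notin w2T E.
have : w1 \in w2 |: T by rewrite -E setU11.
by rewrite in_setU1 (negbTE w1T) orbF => /eqP.
Qed.

Lemma NbU A B : Nb (A :|: B) = Nb A :&: Nb B.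
Proof.
apply/setP => w; rewrite !inE; apply/forall_inP/andP.
- by move=> H; split; apply/forall_inP => x xA; apply: H; rewrite inE xA ?orbT.
- by case=> /forall_inP H1 /forall_inP H2 x; rewrite inE => /orP [] ?; [apply: H1|apply: H2].
Qed.

Lemma set2C (x y : V) : [set x; y] = [set y; x].
Proof. by apply/setP => z; rewrite !inE orbC. Qed.

Lemma clique1 v : is_clique adj [set v].
Proof.
apply/forall_inP => x; rewrite inE => /eqP ->; apply/forall_inP => y; rewrite inE => /eqP ->.
by rewrite eqxx.
Qed.

Lemma clique2 x y : adj x y -> is_clique adj [set x; y].
Proof.
move=> hxy; apply/forall_inP => u; rewrite !inE => /orP [] /eqP ->;
  apply/forall_inP => w; rewrite !inE => /orP [] /eqP ->; apply/implyP; rewrite ?eqxx //.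
by rewrite adjC.
Qed.

Lemma Nb2 x y : Nb [set x; y] = Nb [set x] :&: Nb [set y].
Proof. by rewrite -NbU; congr Nb; apply/setP => z; rewrite !inE. Qed.

Lemma Nb3 x y z : Nb [set x; y; z] = Nb [set x] :&: Nb [set y] :&: Nb [set z].
Proof. by rewrite -!NbU; congr Nb; apply/setP => w; rewrite !inE orbA. Qed.

Lemma tri T : is_tclique adj 3 T -> exists a b c,
  [/\ a != b, a != c, b != c, [/\ adj a b, adj a c & adj b c] & T = [set a; b; c]].
Proof.
case/andP => cT /eqP c3.
have : (0 < #|T|)%N by rewrite c3.
case/card_gt0P => a aT.
have : #|T :\ a| == 2%N by move: c3; rewrite (cardsD1 a T) aT add1n => [[->]].
case/cards2P => b [c [bc E]].
have inTa z : z \in [set b; c] -> (z != a) && (z \in T).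
  by rewrite -E in_setD1.
have /andP [ba bT] : (b != a) && (b \in T) by apply: inTa; rewrite !inE eqxx.
have /andP [ca cT'] : (c != a) && (c \in T) by apply: inTa; rewrite !inE eqxx orbT.
have ab : a != b by rewrite eq_sym.
have ac : a != c by rewrite eq_sym.
have adjT x y : x \in T -> y \in T -> x != y -> adj x y.
  by move=> xT yT nxy; move/forall_inP: cT => /(_ x xT) /forall_inP /(_ y yT) /implyP; apply.
exists a, b, c; split => //; first by split; apply: adjT.
apply/setP => z; rewrite !inE.
case za: (z == a); first by rewrite (eqP za) aT.
have : (z \in T :\ a) = (z \in [set b; c]) by rewrite E.
by rewrite !inE za /=.
Qed.

Lemma sum_edges (R : nmodType) (F : {set V} -> R) a b c :
  a != b -> a != c -> b != c -> adj a b -> adj a c -> adj b c ->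
  (\sum_(e : {set V} | (e \subset [set a; b; c]) && is_tclique adj 2 e) F e
    = F [set a; b] + (F [set a; c] + (F [set b; c] + 0)))%R.
Proof.
move=> ab ac bc hab hac hbc.
set s := [:: [set a; b]; [set a; c]; [set b; c]].
have nin x y z : x != z -> y != z -> [set x; y] != [set x; z].
  move=> xz yz; apply/eqP => Ee.
  have : z \in [set x; y] by rewrite Ee !inE eqxx orbT.
  by rewrite !inE eq_sym (negbTE xz) eq_sym (negbTE yz).
have us : uniq s.
  rewrite /s /= !inE !negb_or !andbT.
  rewrite /s /=; apply/andP; split; first (apply/andP; split).
  - exact: nin.
  - by rewrite (set2C a b) nin // eq_sym.
  - by rewrite (set2C a c) (set2C b c) nin // eq_sym.
rewrite (eq_bigl (mem s)); first by rewrite -big_uniq // !big_cons big_nil.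
move=> e; rewrite /= /is_tclique.
have in2 x y : x \in [set a; b; c] -> y \in [set a; b; c] -> adj x y ->
    ([set x; y] \subset [set a; b; c]) && (is_clique adj [set x; y] && (#|[set x; y]| == 2%N)).
  move=> xT yT hxy; rewrite clique2 // cards2.
  have -> : x != y by apply/eqP => exy; move: hxy; rewrite exy adjI.
  rewrite andbT; apply/subsetP => z; rewrite in_set2 => /orP [] /eqP -> //.
apply/idP/idP.
- case/andP => sub /andP [_ /cards2P [x [y [xy Ee]]]].
  have xT : x \in [set a; b; c] by apply: (subsetP sub); rewrite Ee !inE eqxx.
  have yT : y \in [set a; b; c] by apply: (subsetP sub); rewrite Ee !inE eqxx orbT.
  rewrite Ee; move: xT yT xy; rewrite !inE => /orP [/orP [] | ] /eqP -> /orP [/orP [] | ] /eqP ->;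
    rewrite ?eqxx // => _;
    by rewrite ?(set2C b a) ?(set2C c a) ?(set2C c b) ?eqxx ?orbT.
- rewrite /s !inE => /or3P [] /eqP ->; apply: in2; rewrite ?inE ?eqxx ?orbT //.
Qed.

Lemma cntD (X Y : {set V}) : (#|X| <= #|X :&: Y| + (#|V| - #|Y|))%N.
Proof.
rewrite -(cardsID Y X) leq_add2l.
have -> : (#|V| - #|Y|)%N = #|~: Y| by rewrite (cardsCs (~: Y)) setCK.
by apply: subset_leq_card; rewrite setDE subsetIr.
Qed.

Lemma cnt3 (A B C : {set V}) :
  (#|A| + #|B| + #|C| + #|A :&: B :&: C| <= #|V| + #|A :&: B| + #|A :&: C| + #|B :&: C|)%N.
Proof.
have h1 := cardsUI A B.
have h2 := cardsUI (A :|: B) C.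
have h3 := cardsUI (A :&: C) (B :&: C).
rewrite setIUl in h2.
have e : A :&: C :&: (B :&: C) = A :&: B :&: C.
  by apply/setP => z; rewrite !inE; case: (z \in A); case: (z \in B); case: (z \in C).
rewrite e in h3.
have h4 : (#|A :|: B :|: C| <= #|V|)%N by apply: max_card.
move/ssrnat.leP: h4 => h4; apply/ssrnat.leP; rewrite -!plusE in h1 h2 h3 *; lia.
Qed.

End Graph.

Local Open Scope ring_scope.

Section Alg.
Variable R : realFieldType.
Definition radd (x y : R) : R := x + y.
Definition rmul (x y : R) : R := x * y.
Definition ropp (x : R) : R := - x.
Definition rsub (x y : R) : R := x - y.
Definition rz : R := 0.
Definition ro : R := 1.
Lemma RT : @ring_theory (Num.RealField.sort R) rz ro radd rmul rsub ropp eq.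
Proof.
split; rewrite /radd/rmul/ropp/rsub/rz/ro => *; [exact: add0r|exact: addrC|exact: addrA|exact: mul1r|exact: mulrC|exact: mulrA|exact: mulrDl|by []|exact: subrr].
Qed.
Add Ring Rring : RT.
Lemma raddE (x y : R) : x + y = radd x y. Proof. by []. Qed.
Lemma rmulE (x y : R) : x * y = rmul x y. Proof. by []. Qed.
Lemma roppE (x : R) : - x = ropp x. Proof. by []. Qed.
Lemma rzE : 0 = rz :> R. Proof. by []. Qed.
Lemma roE : 1 = ro :> R. Proof. by []. Qed.
Lemma req (x y : R) : radd x rz = radd y rz -> x = y.
Proof. by rewrite /radd /rz !addr0. Qed.
Ltac rring := rewrite ?mulrSr ?mulr0n ?rmulE ?roppE ?raddE ?rzE ?roE; apply: req; ring.

Lemma le_by (a b e : R) : b - a = e -> 0 <= e -> a <= b.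
Proof. by move=> <-; rewrite subr_ge0. Qed.

Definition pp (d k : R) : R := d - Num.min d k.

Lemma pp_cases d k : (d <= k /\ pp d k = 0) \/ (k < d /\ pp d k = d - k).
Proof.
rewrite /pp minEle; case: leP => h; [left|right]; split => //; exact: subrr.
Qed.

Lemma pp_ge0 d k : 0 <= pp d k.
Proof. by case: (pp_cases d k) => [[_ ->]|[h ->]] //; rewrite subr_ge0 ltW. Qed.

Lemma pp_ge d k : d - k <= pp d k.
Proof. by case: (pp_cases d k) => [[h ->]|[h ->]] //; rewrite subr_le0. Qed.

Lemma minE d k : Num.min d k = d - pp d k.
Proof. by rewrite /pp; set m := Num.min d k; rring. Qed.

Lemma lt_by (a b e : R) : b - a = e -> 0 < e -> a < b.
Proof. by move=> <-; rewrite subr_gt0. Qed.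

Lemma four2 (x : R) : (4 - 2%:R) * x = 2 * x. Proof. by rring. Qed.
Lemma four3 (x : R) : (4 - 3%:R) * x = x. Proof. by rring. Qed.

Lemma beta_facts (b : R) : 1 / 4 <= b -> b < 1 / 3 ->
  [/\ 0 < b, 3 * b < 1 & (1 - 2 / (29 - 75 * b)) * ((4 * b - 1) / (1 - 2 * b)) < 1].
Proof.
move=> h1 h2.
have b3 : 3 * b < 1 by rewrite mulrC -ltr_pdivlMr.
have b4 : 1 <= 4 * b by rewrite mulrC -ler_pdivrMr.
have b0 : 0 < b.
  apply: lt_le_trans h1; exact: divr_gt0.
split => //.
have D0 : 0 < 29 - 75 * b.
  apply: (@lt_by _ _ (25%:R * (1 - 3 * b) + 4)); first by rring.
  by apply: addr_gt0; [apply: mulr_gt0|]; rewrite ?ltr0n ?subr_gt0.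
have b2 : 0 < 1 - 2 * b.
  by apply: (@lt_by _ _ ((1 - 3 * b) + b)); [rring|apply: addr_gt0; rewrite ?subr_gt0].
have r1 : (4 * b - 1) / (1 - 2 * b) < 1.
  rewrite ltr_pdivrMr // mul1r.
  by apply: (@lt_by _ _ (2%:R * (1 - 3 * b))); [rring|apply: mulr_gt0; rewrite ?ltr0n ?subr_gt0].
have r0 : 0 <= (4 * b - 1) / (1 - 2 * b).
  by apply: divr_ge0; [rewrite subr_ge0|exact: ltW].
apply: le_lt_trans r1; apply: ler_piMl => //.
rewrite gerBl; apply: divr_ge0 => //; exact: ltW.
Qed.

Variable b : R.
Hypothesis b0 : 0 < b.

Definition hh (p : R) : R := (1 - 2 * b) * (p / (p + b)).
Definition gg (p : R) : R := p - hh p.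

Lemma pb0 p : 0 <= p -> 0 < p + b.
Proof. by move=> p0; apply: ltr_wpDl. Qed.

Lemma gg_small p : 0 <= p -> p <= 1 - 3 * b -> gg p <= 0.
Proof.
move=> p0 p1; rewrite /gg /hh subr_le0 mulrA ler_pdivlMr ?pb0 //.
apply: (@le_by _ _ (p * (1 - 3 * b - p))); first by rring.
by apply: mulr_ge0 => //; rewrite subr_ge0.
Qed.

Hypothesis b3 : 3 * b < 1.

Lemma b13 : 0 < 1 - 3 * b.
Proof. by rewrite subr_gt0. Qed.

Lemma hh_big p : 1 - 3 * b <= p -> 1 - 3 * b <= hh p.
Proof.
move=> p1; have p0 : 0 <= p by apply: le_trans p1; exact: ltW b13.
rewrite /hh mulrA ler_pdivlMr ?pb0 //.
apply: (@le_by _ _ (b * (p - (1 - 3 * b)))); first by rring.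
by apply: mulr_ge0; [exact: ltW|rewrite subr_ge0].
Qed.

Lemma pp_le_tau (t d : R) : d <= t + b -> pp d (2 * b) <= pp t b.
Proof.
move=> h; case: (pp_cases d (2 * b)) => [[_ ->]|[h2 ->]]; first exact: pp_ge0.
apply: le_trans (pp_ge t b).
by apply: (@le_by _ _ (t + b - d)); [rring|rewrite subr_ge0].
Qed.

Lemma edge (t d : R) : t <= d -> d <= t + b -> 1 - 3 * b < pp t b ->
  gg (pp d (2 * b)) <= 0 \/ gg (pp d (2 * b)) <= (d - t) + (pp t b + 2 * b - 1).
Proof.
move=> h1 h2 h3; case: (leP (pp d (2 * b)) (1 - 3 * b)) => h.
  by left; apply: gg_small => //; exact: pp_ge0.
right.
have hb := hh_big (ltW h).
case: (pp_cases d (2 * b)) => [[_ e]|[_ e]].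
  by move: h; rewrite e ltNge (ltW b13).
case: (pp_cases t b) => [[_ e2]|[_ e2]].
  by move: h3; rewrite e2 ltNge (ltW b13).
rewrite /gg e2; move: hb; rewrite e => hb.
set H := hh (d - 2 * b) in hb *.
by apply: (@le_by _ _ (H - (1 - 3 * b))); [rring|rewrite subr_ge0].
Qed.

Lemma comb (g1 g2 g3 w1 w2 w3 A B : R) :
  g1 <= 0 \/ g1 <= w1 + A -> g2 <= 0 \/ g2 <= w2 + A -> g3 <= 0 \/ g3 <= w3 + A ->
  0 <= w1 -> 0 <= w2 -> 0 <= w3 -> 0 <= w1 + w2 + w3 + B ->
  A <= B -> 2 * A <= B -> 3 * A <= B ->
  g1 + g2 + g3 <= w1 + w2 + w3 + B.
Proof.
move=> [h1|h1] [h2|h2] [h3|h3] p1 p2 p3 p0 a1 a2 a3;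
  apply: le_trans (lerD (lerD h1 h2) h3) _.
- by rewrite !addr0.
- by apply: (@le_by _ _ (w1 + w2 + (B - A))); [rring|apply: addr_ge0; [by do ?apply: addr_ge0|by rewrite subr_ge0]].
- by apply: (@le_by _ _ (w1 + w3 + (B - A))); [rring|apply: addr_ge0; [by do ?apply: addr_ge0|by rewrite subr_ge0]].
- by apply: (@le_by _ _ (w1 + (B - 2 * A))); [rring|apply: addr_ge0; [by do ?apply: addr_ge0|by rewrite subr_ge0]].
- by apply: (@le_by _ _ (w2 + w3 + (B - A))); [rring|apply: addr_ge0; [by do ?apply: addr_ge0|by rewrite subr_ge0]].
- by apply: (@le_by _ _ (w2 + (B - 2 * A))); [rring|apply: addr_ge0; [by do ?apply: addr_ge0|by rewrite subr_ge0]].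
- by apply: (@le_by _ _ (w3 + (B - 2 * A))); [rring|apply: addr_ge0; [by do ?apply: addr_ge0|by rewrite subr_ge0]].
- by apply: (@le_by _ _ (B - 3 * A)); [rring|rewrite subr_ge0].
Qed.

Lemma Kbound (t d1 d2 d3 : R) :
  t <= d1 -> t <= d2 -> t <= d3 -> d1 <= t + b -> d2 <= t + b -> d3 <= t + b ->
  t <= 1 -> 0 <= d1 + d2 + d3 - t - (2 - 3 * b) ->
  gg (pp d1 (2 * b)) + gg (pp d2 (2 * b)) + gg (pp d3 (2 * b))
    <= d1 + d2 + d3 - t - (2 - 3 * b).
Proof.
move=> l1 l2 l3 u1 u2 u3 t1 M0.
case: (leP (pp t b) (1 - 3 * b)) => h.
  have s i : t <= i -> i <= t + b -> gg (pp i (2 * b)) <= 0.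
    move=> _ hi; apply: gg_small; first exact: pp_ge0.
    exact: le_trans (pp_le_tau hi) h.
  apply: le_trans M0; rewrite -[0]addr0 -[0 + 0]addr0.
  by apply: lerD; [apply: lerD|]; apply: s.
case: (pp_cases t b) => [[_ e2]|[tb e2]].
  by move: h; rewrite e2 ltNge (ltW b13).
have -> : d1 + d2 + d3 - t - (2 - 3 * b) =
    (d1 - t) + (d2 - t) + (d3 - t) + (2 * t - 2 + 3 * b) by rring.
apply: comb; try (apply: edge => //); rewrite ?subr_ge0 //.
- by have -> : (d1 - t) + (d2 - t) + (d3 - t) + (2 * t - 2 + 3 * b) =
    d1 + d2 + d3 - t - (2 - 3 * b) by rring.
- rewrite e2; move: h; rewrite e2 => h.
  by apply: (@le_by _ _ (t - b - (1 - 3 * b))); [rring|rewrite subr_ge0 ltW].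
- rewrite e2.
  by apply: (@le_by _ _ b); [rring|exact: ltW].
- rewrite e2.
  by apply: (@le_by _ _ (1 - t)); [rring|rewrite subr_ge0].
Qed.

Lemma alg_main (c t d1 d2 d3 x1 x2 x3 : R) :
  c < 1 ->
  1 - b <= x1 -> 1 - b <= x2 -> 1 - b <= x3 ->
  t <= 1 -> t <= d1 -> t <= d2 -> t <= d3 ->
  d1 <= t + (1 - x3) -> d2 <= t + (1 - x2) -> d3 <= t + (1 - x1) ->
  x1 + x2 + x3 + t <= 1 + (d1 + d2 + d3) ->
  let Dt := (Num.min d1 (2 * b) + (Num.min d2 (2 * b) + (Num.min d3 (2 * b) + 0)))
            - (2 - 3 * b + Num.min t b) in
  let rhs := c * pp t b - (1 - 2 * b) *
      (pp d1 (2 * b) / (pp d1 (2 * b) + b) + (pp d2 (2 * b) / (pp d2 (2 * b) + b)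
       + (pp d3 (2 * b) / (pp d3 (2 * b) + b) + 0))) in
  rhs <= Dt /\ (Dt = rhs -> ~~ (0 < pp t b) /\ x1 = 1 - b /\ x2 = 1 - b /\ x3 = 1 - b).
Proof.
move=> c1 hx1 hx2 hx3 t1 l1 l2 l3 f1 f2 f3 F3 Dt rhs.
have u_of (d x : R) : 1 - b <= x -> d <= t + (1 - x) -> d <= t + b.
  move=> hx hd; apply: le_trans hd _; rewrite lerD2l.
  by apply: (@le_by _ _ (x - (1 - b))); [rring|rewrite subr_ge0].
have u1 := u_of _ _ hx3 f1; have u2 := u_of _ _ hx2 f2; have u3 := u_of _ _ hx1 f3.
set M := d1 + d2 + d3 - t - (2 - 3 * b).
have M0 : 0 <= M.
  apply: (@le_by _ _ ((1 + (d1 + d2 + d3) - (x1 + x2 + x3 + t)) +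
      (x1 - (1 - b)) + (x2 - (1 - b)) + (x3 - (1 - b)))); first by rewrite /M; rring.
  have s0 (u v : R) : v <= u -> 0 <= u - v by rewrite subr_ge0.
  by apply: addr_ge0; [apply: addr_ge0; [apply: addr_ge0|]|]; apply: s0.
have K := Kbound l1 l2 l3 u1 u2 u3 t1 M0.
have ID : Dt - rhs = (M - (gg (pp d1 (2 * b)) + gg (pp d2 (2 * b)) + gg (pp d3 (2 * b))))
                     + (1 - c) * pp t b.
  rewrite /Dt /rhs /M /gg /hh !minE.
  set p1 := pp d1 _; set p2 := pp d2 _; set p3 := pp d3 _; set tau := pp t b.
  set q1 := p1 / _; set q2 := p2 / _; set q3 := p3 / _.
  rring.
have c0 : 0 < 1 - c by rewrite subr_gt0.
have P1 : 0 <= M - (gg (pp d1 (2 * b)) + gg (pp d2 (2 * b)) + gg (pp d3 (2 * b))).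
  by rewrite subr_ge0.
have P2 : 0 <= (1 - c) * pp t b by apply: mulr_ge0; [exact: ltW|exact: pp_ge0].
split.
  by rewrite -subr_ge0 ID; apply: addr_ge0.
move=> E.
have : Dt - rhs == 0 by rewrite E subrr.
rewrite ID paddr_eq0 // mulf_eq0 (negbTE (lt0r_neq0 c0)) /= => /andP [/eqP Z1 /eqP tau0].
have p0 (d : R) : d <= t + b -> pp d (2 * b) = 0.
  move=> hd; apply: le_anti; rewrite pp_ge0 andbT -tau0; exact: pp_le_tau.
move: Z1; rewrite (p0 _ u1) (p0 _ u2) (p0 _ u3) /gg /hh mul0r mulr0 !subr0 !addr0 => M00.
split; first by rewrite tau0 ltxx.
have S3 : x1 + x2 + x3 <= 3 - 3 * b.
  apply: (@le_by _ _ ((1 + (d1 + d2 + d3)) - (x1 + x2 + x3 + t) - M)).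
    by rewrite /M; rring.
  have -> : M = 0 by rewrite -[M]subr0; exact: M00.
  by rewrite subr0 subr_ge0.
have eqx (x y z : R) : 1 - b <= x -> 1 - b <= y -> 1 - b <= z -> x + y + z <= 3 - 3 * b ->
   x = 1 - b.
  move=> hx hy hz hs; apply: le_anti; rewrite hx andbT.
  apply: (@le_by _ _ ((3 - 3 * b - (x + y + z)) + (y - (1 - b)) + (z - (1 - b)))).
    by rring.
  have s0 (u v : R) : v <= u -> 0 <= u - v by rewrite subr_ge0.
  by apply: addr_ge0; [apply: addr_ge0|]; apply: s0.
split; first exact: (eqx _ _ _ hx1 hx2 hx3 S3).
split; first by apply: (eqx _ x1 x3) => //; apply: le_trans S3; apply: (@le_by _ _ 0); [rring|].
by apply: (eqx _ x1 x2) => //; apply: le_trans S3; apply: (@le_by _ _ 0); [rring|].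
Qed.

End Alg.


Theorem mainTheorem14 (R : realFieldType) (beta : R) (V : finType) (adj : rel V) :
  simple_graph adj ->
  1 / 4 <= beta -> beta < 1 / 3 ->
  (* minimum degree of G equals (1 - beta) n *)
  (forall v : V, (1 - beta) * (#|V|)%:R <= (cdeg adj [set v])%:R) ->
  (exists v : V, (cdeg adj [set v])%:R = (1 - beta) * (#|V|)%:R) ->
  forall T : {set V}, is_tclique adj 3 T ->
    let rhs :=
      (1 - 2 / (29 - 75 * beta)) * ((4 * beta - 1) / (1 - 2 * beta))
        * Dplus beta adj T
      - (1 - 2 * beta) *
        (\sum_(e : {set V} | (e \subset T) && is_tclique adj 2 e)
           (Dplus beta adj e / (Dplus beta adj e + beta))) in
    rhs <= Dtilde beta adj T /\
    (Dtilde beta adj T = rhs ->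
       ~~ heavy beta adj T /\
       (forall v : V, v \in T -> (cdeg adj [set v])%:R = (1 - beta) * (#|V|)%:R)).
Proof.
move=> [adjC adjI] hb1 hb2 hmin [v0 _] T hT.
have [b0 b3 c1] := beta_facts hb1 hb2.
have [a [b [c [ab ac bc [hab hac hbc] ET]]]] := tri hT.
have cT : is_clique adj T by case/andP: hT.
have c3 : #|T| = 3%N by case/andP: hT => _ /eqP.
subst T.
rewrite /Dtilde !(sum_edges adjC adjI _ ab ac bc hab hac hbc).
rewrite /Dplus /Dminus c3 !cards2 ab ac bc /= !four2 four3.
rewrite /heavy /Dplus /Dminus c3 four3.
set N := #|V|.
have N0 : (0 < N)%N by apply/card_gt0P; exists v0.
have n0 : 0 < N%:R :> R by rewrite ltr0n.
set NA := Nb adj [set a]; set NB := Nb adj [set b]; set NC := Nb adj [set c].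
have eA : cdeg adj [set a] = #|NA| by rewrite (cdegE adjC adjI) ?clique1.
have eB : cdeg adj [set b] = #|NB| by rewrite (cdegE adjC adjI) ?clique1.
have eC : cdeg adj [set c] = #|NC| by rewrite (cdegE adjC adjI) ?clique1.
have eAB : cdeg adj [set a; b] = #|NA :&: NB| by rewrite (cdegE adjC adjI) ?Nb2 ?clique2.
have eAC : cdeg adj [set a; c] = #|NA :&: NC| by rewrite (cdegE adjC adjI) ?Nb2 ?clique2.
have eBC : cdeg adj [set b; c] = #|NB :&: NC| by rewrite (cdegE adjC adjI) ?Nb2 ?clique2.
have eT : cdeg adj [set a; b; c] = #|NA :&: NB :&: NC| by rewrite (cdegE adjC adjI) ?Nb3.
have n2r (u v : nat) : (u <= v)%N -> u%:R / N%:R <= v%:R / N%:R :> R.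
  by move=> h; rewrite ler_pM2r ?invr_gt0 // ler_nat.
have NN : N%:R / N%:R = 1 :> R by rewrite divff // lt0r_neq0.
have xge (v : V) : 1 - beta <= (cdeg adj [set v])%:R / N%:R.
  by rewrite ler_pdivlMr.
have xa := xge a; have xb := xge b; have xc := xge c.
rewrite eA in xa; rewrite eB in xb; rewrite eC in xc.
have hD (X Y : {set V}) : #|X|%:R / N%:R <= #|X :&: Y|%:R / N%:R + (1 - #|Y|%:R / N%:R) :> R.
  have := n2r _ _ (cntD X Y); rewrite natrD natrB ?max_card // mulrDl mulrBl NN //.
have F1 := hD (NA :&: NB) NC.
have F2 := hD (NA :&: NC) NB.
have F3 := hD (NB :&: NC) NA.
rewrite setIAC in F2.
have e3 : NB :&: NC :&: NA = NA :&: NB :&: NC by rewrite setIC setIA.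
rewrite e3 in F3.
have G3 := n2r _ _ (cnt3 NA NB NC).
rewrite !natrD !mulrDl NN in G3.
have t1 : #|NA :&: NB :&: NC|%:R / N%:R <= 1 :> R.
  by have := n2r _ _ (max_card (NA :&: NB :&: NC)); rewrite NN.
have l1 : #|NA :&: NB :&: NC|%:R / N%:R <= #|NA :&: NB|%:R / N%:R :> R.
  by apply: n2r; apply: subset_leq_card; exact: subsetIl.
have l2 : #|NA :&: NB :&: NC|%:R / N%:R <= #|NA :&: NC|%:R / N%:R :> R.
  by apply: n2r; apply: subset_leq_card; rewrite setIAC; exact: subsetIl.
have l3 : #|NA :&: NB :&: NC|%:R / N%:R <= #|NB :&: NC|%:R / N%:R :> R.
  by apply: n2r; apply: subset_leq_card; rewrite -e3; exact: subsetIl.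
rewrite /cD eAB eAC eBC eT.
have := alg_main b0 b3 c1 xa xb xc t1 l1 l2 l3 F1 F2 F3.
have G3' : #|NA|%:R / N%:R + #|NB|%:R / N%:R + #|NC|%:R / N%:R +
    #|NA :&: NB :&: NC|%:R / N%:R <= 1 + (#|NA :&: NB|%:R / N%:R + #|NA :&: NC|%:R / N%:R +
    #|NB :&: NC|%:R / N%:R) :> R by rewrite !addrA.
move=> /(_ G3') [H1 H2]; split; first exact: H1.
move=> E; case: (H2 E) => [nh [ea [eb ec]]]; split; first exact: nh.
have n0' : N%:R != 0 :> R by rewrite lt0r_neq0.
move=> v; rewrite !inE => /orP [/orP [] | ] /eqP ->.
- by rewrite eA -ea divfK.
- by rewrite eB -eb divfK.
- by rewrite eC -ec divfK.
Qed.
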